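(* For all integers $r\ge 2$ and $e\ge 2$ there exists $n_0(r,e)$ such that $f_r(n,(r-1)e,e)=h_r(n,e)$ for all $n\ge n_0(r,e)$.
   Context: An $r$-graph is an $r$-uniform hypergraph. A $(v,e)$-configuration in an $r$-graph is a subgraph with $e$ edges and at most $v$ vertices. $f_r(n,v,e)$ denotes the maximum number of edges in an $r$-graph on $n$ vertices containing no $(v,e)$-configuration. A (Berge) cycle of length $k\ge 2$ in a hypergraph is an alternating sequence $v_1,e_1,v_2,e_2,\dots,v_k,e_k$ of distinct vertices $v_i$ and distinct edges $e_i$ such that $v_i,v_{i+1}\in e_i$ for each $i$ (indices mod $k$); e.g. a $2$-cycle is a pair of edges sharing two distinct vertices. The girth of an $r$-graph is the length of its shortest cycle (infinite if there is none). $h_r(n,g)$ denotes the maximum number of edges in an $r$-graph on $n$ vertices of girth greater than $g$. *)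

(* Defs.v *)
From mathcomp Require Import all_boot all_order.
Set Implicit Arguments. Unset Strict Implicit. Unset Printing Implicit Defensive.

Definition uniform (r n : nat) (H : {set {set 'I_n}}) : bool :=
  [forall E in H, #|E| == r].

Definition has_config (n v e : nat) (H : {set {set 'I_n}}) : bool :=
  [exists F : {set {set 'I_n}},
     [&& F \subset H, #|F| == e & #|cover F| <= v]].

Definition has_cycle (n k : nat) (H : {set {set 'I_n}}) : bool :=
  (1 < k) &&
  [exists vs : {ffun 'I_k -> 'I_n}, exists es : {ffun 'I_k -> {set 'I_n}},
     [&& injectiveb vs, injectiveb es &
         [forall i : 'I_k, [&& es i \in H, vs i \in es i & vs (ordS i) \in es i]]]].

Definition girth_gt (n g : nat) (H : {set {set 'I_n}}) : bool :=
  [forall k : 'I_g.+1, ~~ has_cycle k H].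

Definition f_r (r n v e : nat) : nat :=
  \max_(H : {set {set 'I_n}} | uniform r H && ~~ has_config v e H) #|H|.

Definition h_r (r n g : nat) : nat :=
  \max_(H : {set {set 'I_n}} | uniform r H && girth_gt g H) #|H|.

(* Main.v *)
Require Import Defs.
From mathcomp Require Import all_boot all_order.
From mathcomp Require Import zify.
Set Implicit Arguments. Unset Strict Implicit. Unset Printing Implicit Defensive.

Lemma disjointNP (T : finType) (A B : {set T}) : reflect (exists2 v, v \in A & v \in B) (~~ [disjoint A & B]).
Proof.
apply: (iffP idP).
  rewrite -setI_eq0 => /set0Pn[v]; rewrite inE => /andP[]; by exists v.
case=> v vA vB; apply/negP; rewrite -setI_eq0 => /eqP h.
by have := in_set0 v; rewrite -h inE vA vB.
Qed.

Lemma coverU (T : finType) (P Q : {set {set T}}) : cover (P :|: Q) = cover P :|: cover Q.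
Proof. by rewrite /cover bigcup_setU. Qed.

Lemma cover_set1U (T : finType) (Y : {set T}) (P : {set {set T}}) : cover (Y |: P) = Y :|: cover P.
Proof. by rewrite coverU cover1. Qed.

Lemma card_disjU (T : finType) (A B : {set T}) : [disjoint A & B] -> #|A :|: B| = #|A| + #|B|.
Proof. by move=> d; have := cardsUI A B; rewrite (disjoint_setI0 d) cards0 addn0. Qed.

Lemma cover0 (T : finType) : cover (set0 : {set {set T}}) = set0.
Proof. by apply/setP => x; rewrite inE; apply/bigcupP => [[A]]; rewrite inE. Qed.

Lemma cover_sub (T : finType) (P Q : {set {set T}}) : P \subset Q -> cover P \subset cover Q.
Proof.
move=> sub; apply/subsetP => x /bigcupP[A AP xA]; apply/bigcupP; exists A => //.
exact: subsetP sub A AP.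
Qed.

Section Comps.
Variable n : nat.
Notation vert := 'I_n.
Notation edges := {set {set 'I_n}}.
Implicit Types (G H C S T A P F B : edges) (E X Y Z : {set vert}) (v : vert).
Implicit Types (SS : {set edges}).

Definition adj (H : edges) : rel {set vert} :=
  fun X Y => [&& X \in H, Y \in H & ~~ [disjoint X & Y]].

Lemma adj_sym H : symmetric (adj H).
Proof. by move=> X Y; rewrite /adj andbCA disjoint_sym andbA. Qed.

Definition comp (H : edges) (E : {set vert}) : edges := [set Y in H | connect (adj H) E Y].

Definition conn (C : edges) := forall S : edges, S \subset C -> S != set0 -> S != C ->
  exists2 Y, Y \in C :\: S & ~~ [disjoint Y & cover S].

Definition closed (H C : edges) := forall Y, Y \in H -> ~~ [disjoint Y & cover C] -> Y \in C.

Lemma comp_sub H E : comp H E \subset H.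
Proof. by apply/subsetP=> Y; rewrite inE => /andP[]. Qed.

Lemma comp_self H E : E \in H -> E \in comp H E.
Proof. by move=> EH; rewrite inE EH connect0. Qed.

Lemma comp_eq H E Y : Y \in comp H E -> comp H Y = comp H E.
Proof.
rewrite inE => /andP[YH cEY]; apply/setP=> Z; rewrite !inE.
case: (Z \in H) => //=.
have sc := sym_connect_sym (adj_sym H).
apply/idP/idP => h; first exact: connect_trans cEY h.
by rewrite sc in cEY; apply: connect_trans cEY h.
Qed.

Lemma meet_adj H X Y : X \in H -> Y \in H -> ~~ [disjoint X & Y] -> connect (adj H) X Y.
Proof. by move=> XH YH d; apply: connect1; rewrite /adj XH YH. Qed.



Lemma comp_closed H E : closed H (comp H E).
Proof.
move=> Y YH /disjointNP[v vY /bigcupP[X XC vX]].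
have := XC; rewrite inE => /andP[XH cEX].
rewrite inE YH /=; apply: connect_trans cEX _; apply: meet_adj => //.
by apply/disjointNP; exists v.
Qed.

Lemma path_cross (e : rel {set vert}) (S : edges) x p :
  path e x p -> x \in S -> last x p \notin S ->
  exists X Y, [/\ X \in S, Y \notin S, e X Y & Y \in x :: p].
Proof.
elim: p x => [|y p IH] x /=; first by move=> _ ->.
move=> /andP[exy pp] xS lS.
case yS: (y \in S).
  have [X [Y [XS YS eXY Yin]]] := IH y pp yS lS.
  by exists X, Y; split=> //; rewrite inE Yin orbT.
by exists x, y; rewrite yS; split=> //; rewrite !inE eqxx orbT.
Qed.

Lemma comp_conn H E : conn (comp H E).
Proof.
move=> S SC /set0Pn[A AS] SnC.
have [B BC BS] : exists2 B, B \in comp H E & B \notin S.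
  apply/exists_inP; move: SnC; apply: contraR; rewrite negb_exists_in => /forall_inP h.
  by rewrite eqEsubset SC /=; apply/subsetP=> B /h; rewrite negbK.
have AC := subsetP SC A AS.
rewrite -(comp_eq AC) in BC; move: BC; rewrite inE => /andP[BH cAB].
move: cAB => /connectP[p pp lastp].
have lS : last A p \notin S by rewrite -lastp.
have [X [Y [XS YS adjXY Yin]]] := path_cross pp AS lS.
move: adjXY; rewrite /adj => /and3P[XH YH dXY].
exists Y.
  rewrite inE YS /= -(comp_eq AC) inE YH /=.
  by apply: (path_connect pp Yin).
case/disjointNP: dXY => v vX vY; apply/disjointNP; exists v => //.
by apply/bigcupP; exists X.
Qed.

Lemma comp_disj H E E' : comp H E != comp H E' -> [disjoint comp H E & comp H E'].
Proof.
apply: contraR => /disjointNP[X X1 X2].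
by rewrite -(comp_eq X1) -(comp_eq X2).
Qed.

Lemma comp_cover_disj H E E' : comp H E != comp H E' ->
  [disjoint cover (comp H E) & cover (comp H E')].
Proof.
apply: contraR => /disjointNP[v /bigcupP[X X1 vX] /bigcupP[Y Y2 vY]].
have YH := subsetP (comp_sub H E') Y Y2.
have Y1 : Y \in comp H E.
  apply: comp_closed => //; apply/disjointNP; exists v => //; by apply/bigcupP; exists X.
by rewrite -(comp_eq Y1) -(comp_eq Y2).
Qed.


Inductive grown (S : edges) : edges -> Prop :=
| grown0 : grown S S
| grownS T Y : grown S T -> Y \notin T -> ~~ [disjoint Y & cover T] -> grown S (Y |: T).

Lemma grown_sub S T : grown S T -> S \subset T.
Proof.
elim=> [|T' Y _ IH _ _]; first exact: subxx.
by apply: subset_trans IH _; apply: subsetUr.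
Qed.

Definition unif r (T : edges) := forall Y, Y \in T -> #|Y| = r.

Lemma unif_sub r T T' : T' \subset T -> unif r T -> unif r T'.
Proof. by move=> sub u Y YT; apply: u; apply: (subsetP sub). Qed.

Lemma cover_setU1 Y T : cover (Y |: T) = Y :|: cover T.
Proof.
apply/setP=> v; rewrite /cover !inE; apply/bigcupP/idP.
  case=> X; rewrite !inE => /orP[/eqP->|XT] vX; first by rewrite vX.
  by apply/orP; right; apply/bigcupP; exists X.
case/orP=> [vY|/bigcupP[X XT vX]]; first by exists Y; rewrite ?inE ?eqxx.
by exists X; rewrite ?inE ?XT ?orbT.
Qed.

Lemma card_add_meet r Y (A : {set vert}) : #|Y| = r -> ~~ [disjoint Y & A] ->
  #|Y :|: A| + 1 <= #|A| + r.
Proof.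
move=> cY /disjointNP[v vY vA].
have := cardsUI Y A.
have : 0 < #|Y :&: A| by apply/card_gt0P; exists v; rewrite inE vY vA.
lia.
Qed.

Lemma grown_cover r S T : unif r T -> grown S T ->
  #|cover T| + (r - 1) * #|S| <= #|cover S| + (r - 1) * #|T|.
Proof.
move=> u g; elim: g u => [|T' Y g IH YT dY] u; first by [].
have uT : unif r T' by apply: unif_sub u; apply: subsetUr.
have h0 := IH uT.
have h1 := card_add_meet (u Y (setU11 Y T')) dY.
have h2 : #|cover T'| <= #|Y :|: cover T'| by apply: subset_leq_card; apply: subsetUr.
rewrite cover_setU1 cardsU1 YT /= mulnDr muln1.
move: h0 h1 h2. set c := #|cover T'|. set d := #|Y :|: cover T'|. set f := #|cover S|. set a := (r - 1) * #|S|. set b := (r - 1) * #|T'|. lia.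
Qed.

Lemma grow_ex C S q : conn C -> S \subset C -> S != set0 -> #|S| <= q <= #|C| ->
  exists T, [/\ grown S T, T \subset C & #|T| = q].
Proof.
move=> cC SC S0; elim: q => [|q IH].
  by move=> /andP[]; rewrite leqn0 cards_eq0 (negPf S0).
move=> /andP[Sq qC].
have [eqSq|ltSq] := eqVneq #|S| q.+1; first by exists S; split=> //; exact: grown0.
have Sq' : #|S| <= q <= #|C| by apply/andP; split; lia.
have [T [gT TC cT]] := IH Sq'.
have TC' : T != C by apply/eqP=> TC'; move: qC; rewrite -TC' cT ltnn.
have T0 : T != set0.
  apply/set0Pn; case/set0Pn: S0 => X XS; exists X; exact: subsetP (grown_sub gT) X XS.
have [Y] := cC T TC T0 TC'; rewrite inE => /andP[YT YC] dY.
exists (Y |: T); split.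
- exact: grownS.
- by rewrite subUset sub1set YC TC.
- by rewrite cardsU1 YT cT.
Qed.


Lemma card_bigcup_le (I : finType) (A : I -> {set vert}) :
  #|\bigcup_(i in I) A i| <= \sum_(i in I) #|A i|.
Proof.
apply: (big_ind2 (fun X m => #|X| <= m)) => [|X1 m1 X2 m2 h1 h2|i _]; rewrite ?cards0 //.
apply: leq_trans (leq_card_setU X1 X2) _; exact: leq_add.
Qed.

Definition bpath T (a b : vert) (l : nat) (vs : nat -> vert) (es : nat -> {set vert}) :=
  [/\ vs 0 = a, vs l = b,
      (forall i j, i <= l -> j <= l -> vs i = vs j -> i = j),
      (forall i j, i < l -> j < l -> es i = es j -> i = j) &
      (forall i, i < l -> [/\ es i \in T, vs i \in es i & vs i.+1 \in es i])].

Lemma bpath_sub T T' a b l vs es : T \subset T' -> bpath T a b l vs es -> bpath T' a b l vs es.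
Proof.
move=> sub [h1 h2 h3 h4 h5]; split=> // i il; have [? ? ?] := h5 i il; split=> //.
exact: subsetP sub _ _.
Qed.

Lemma bpath_rev T a b l vs es : bpath T a b l vs es ->
  bpath T b a l (fun i => vs (l - i)) (fun i => es (l.-1 - i)).
Proof.
move=> [h1 h2 h3 h4 h5]; split.
- by rewrite subn0.
- by rewrite subnn.
- move=> i j il jl /h3; have := leq_subr i l; have := leq_subr j l => a1 a2 /(_ a2 a1); lia.
- move=> i j il jl /h4; move=> /(_ ltac:(lia) ltac:(lia)); lia.
- move=> i il; have [? ? ?] := h5 (l.-1 - i) ltac:(lia).
  have -> : l - i = (l.-1 - i).+1 by lia.
  have -> : l - i.+1 = l.-1 - i by lia.
  by split.
Qed.

Lemma bpath_vcover T a b l vs es : 0 < l -> bpath T a b l vs es -> forall i, i <= l -> vs i \in cover T.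
Proof.
move=> l0 [h1 h2 h3 h4 h5] i il; apply/bigcupP.
have [il'|ieq] := ltnP i l.
  by have [? ? ?] := h5 i il'; exists (es i).
have [? ? ?] := h5 l.-1 ltac:(lia).
exists (es l.-1) => //; have -> : i = l.-1.+1 by lia.
done.
Qed.

Lemma bpath_cons T Y a b c l vs es : 0 < l -> bpath T c b l vs es -> a \notin cover T ->
  a \in Y -> c \in Y -> Y \notin T ->
  bpath (Y |: T) a b l.+1 (fun i => if i is i'.+1 then vs i' else a)
                          (fun i => if i is i'.+1 then es i' else Y).
Proof.
move=> l0 P aT aY cY YT; have vc := bpath_vcover l0 P.
case: P => [h1 h2 h3 h4 h5]; split=> //.
- move=> [|i] [|j] //= il jl.
  + by move=> h; move: aT; rewrite h vc.
  + by move=> h; move: aT; rewrite -h vc.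
  + by move=> /h3 -> .
- move=> [|i] [|j] //= il jl.
  + by move=> h; have [hT _ _] := h5 j jl; move: YT; rewrite h hT.
  + by move=> h; have [hT _ _] := h5 i il; move: YT; rewrite -h hT.
  + by move=> /h4 -> .
- move=> [|i] il /=.
  + by rewrite setU11 aY h1 cY.
  + have [? ? ?] := h5 i il; split=> //; rewrite inE; apply/orP; right => //.
Qed.

Lemma path_in_grown E0 T : grown [set E0] T -> forall a b, a != b -> a \in cover T -> b \in cover T ->
  exists l vs es, [/\ 0 < l, l <= #|T| & bpath T a b l vs es].
Proof.
elim=> [|T' Y g IH YT dY] a b ab.
  rewrite cover1 => aE bE; exists 1, (fun i => if i is 0 then a else b), (fun _ => E0).
  split; rewrite ?cards1 //; split=> //.
  - by move=> [|[|i]] [|[|j]] //= _ _ h; move: ab; rewrite h eqxx.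
  - by move=> [|i] [|j].
  - by move=> [|i] // _; rewrite set11.
rewrite cover_setU1 !inE.
have cT1 : #|T'| < #|Y |: T'| by rewrite cardsU1 YT.
have both : a \in Y -> b \in Y -> exists l vs es, [/\ 0 < l, l <= #|Y |: T'| & bpath (Y |: T') a b l vs es].
  move=> aY bY; exists 1, (fun i => if i is 0 then a else b), (fun _ => Y).
  split=> //; first by rewrite cardsU1 YT.
  split=> //.
  - by move=> [|[|i]] [|[|j]] //= _ _ h; move: ab; rewrite h eqxx.
  - by move=> [|i] [|j].
  - by move=> [|i] // _; rewrite setU11.
have onein : forall a b, a != b -> a \notin cover T' -> a \in Y -> b \in cover T' ->
    exists l vs es, [/\ 0 < l, l <= #|Y |: T'| & bpath (Y |: T') a b l vs es].
  move=> a' b' ab' aT aY bT.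
  case/disjointNP: dY => c cY cT.
  have [eqcb|neqcb] := eqVneq c b'.
    exists 1, (fun i => if i is 0 then a' else b'), (fun _ => Y).
    split=> //; first by rewrite cardsU1 YT.
    split=> //.
    - by move=> [|[|i]] [|[|j]] //= _ _ h; move: ab'; rewrite h eqxx.
    - by move=> [|i] [|j].
    - by move=> [|i] // _; rewrite setU11 aY -eqcb cY.
  have [l [vs [es [l0 lT P]]]] := IH c b' neqcb cT bT.
  exists l.+1, (fun i => if i is i'.+1 then vs i' else a'), (fun i => if i is i'.+1 then es i' else Y).
  split=> //; first by rewrite cardsU1 YT /= add1n ltnS.
  exact: (bpath_cons l0 P aT aY cY YT).
case aY: (a \in Y); case bY: (b \in Y) => /= aT bT.
- exact: both.
- have [aT'|aT'] := boolP (a \in cover T'); last exact: onein.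
  have [l [vs [es [l0 lT P]]]] := IH a b ab aT' bT.
  by exists l, vs, es; split; [done|exact: leq_trans lT (ltnW cT1)|apply: bpath_sub P; apply: subsetUr].
- have [bT'|bT'] := boolP (b \in cover T').
    have [l [vs [es [l0 lT P]]]] := IH a b ab aT bT'.
    by exists l, vs, es; split; [done|exact: leq_trans lT (ltnW cT1)|apply: bpath_sub P; apply: subsetUr].
  have ba : b != a by rewrite eq_sym.
  have [l [vs [es [l0 lT P]]]] := onein b a ba bT' bY aT.
  exists l, (fun i => vs (l - i)), (fun i => es (l.-1 - i)); split; [done|done|]; exact: bpath_rev P.
- have [l [vs [es [l0 lT P]]]] := IH a b ab aT bT.
  by exists l, vs, es; split; [done|exact: leq_trans lT (ltnW cT1)|apply: bpath_sub P; apply: subsetUr].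
Qed.


Lemma cycle_of_path H T Y a b l vs es : 0 < l -> bpath T a b l vs es -> Y \notin T ->
  a \in Y -> b \in Y -> T \subset H -> Y \in H -> has_cycle l.+1 H.
Proof.
move=> l0 [h1 h2 h3 h4 h5] YT aY bY TH YH.
rewrite /has_cycle ltnS l0 /=.
apply/existsP; exists [ffun i : 'I_l.+1 => vs i].
apply/existsP; exists [ffun i : 'I_l.+1 => if i < l then es i else Y].
apply/and3P; split.
- apply/injectiveP => i j; rewrite !ffunE => /h3 h; apply/val_inj; apply: h; rewrite -ltnS; exact: ltn_ord.
- apply/injectiveP => i j; rewrite !ffunE.
  case: ltnP => il; case: ltnP => jl.
  + by move=> /h4 h; apply/val_inj; apply: h.
  + move=> e; have [eT _ _] := h5 i il; by move: YT; rewrite -e eT.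
  + move=> e; have [eT _ _] := h5 j jl; by move: YT; rewrite e eT.
  + move=> _; apply/ord_inj; have := ltn_ord i; have := ltn_ord j; lia.
- apply/forallP => i; rewrite !ffunE /=.
  case: ltnP => il.
  + have [eT vi vi1] := h5 i il; rewrite (subsetP TH _ eT) vi /=.
    by have -> : i.+1 %% l.+1 = i.+1 by rewrite modn_small.
  + have ieq : nat_of_ord i = l by have := ltn_ord i; lia.
    by rewrite YH ieq h2 bY /= modnn h1 aY.
Qed.

Lemma grown_cycle r H E0 T : 1 <= r -> unif r T -> T \subset H -> grown [set E0] T ->
  #|cover T| <= (r - 1) * #|T| -> exists k, [/\ 1 < k, k <= #|T| & has_cycle k H].
Proof.
move=> r1 u TH g; elim: g u TH => [|T' Y g IH YT dY] u TH.
  rewrite cover1 cards1 muln1 (u E0 (set11 E0)); lia.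
have uT : unif r T' by apply: unif_sub u; apply: subsetUr.
have TH' : T' \subset H by apply: subset_trans TH; apply: subsetUr.
have YH : Y \in H by apply: (subsetP TH); apply: setU11.
have cY := u Y (setU11 Y T').
rewrite cover_setU1 cardsU1 YT /=.
have [gt1|le1] := ltnP 1 #|Y :&: cover T'|.
  move=> _; case/card_gt1P: gt1 => a [b [aI bI ab]].
  move: aI bI; rewrite !inE => /andP[aY aT] /andP[bY bT].
  have [l [vs [es [l0 lT P]]]] := path_in_grown g ab aT bT.
  exists l.+1; split; [lia|by rewrite add1n ltnS|].
  exact: (cycle_of_path l0 P YT aY bY TH' YH).
have ge1 : 0 < #|Y :&: cover T'|.
  by case/disjointNP: dY => v vY vT; apply/card_gt0P; exists v; rewrite inE vY vT.
have := cardsUI Y (cover T').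
move=> h hc.
have hc' : #|cover T'| <= (r - 1) * #|T'|.
  move: hc; rewrite mulnDr muln1.
  set c := #|cover T'|. set d := #|Y :|: cover T'|. set p := #|Y :&: cover T'|. set q := (r-1) * #|T'|.
  move: h le1 ge1 cY; rewrite -/c -/d -/p; lia.
have [k [k1 kT hk]] := IH uT TH' hc'.
exists k; split=> //; apply: leq_trans kT _; exact: leq_addl.
Qed.


Lemma ordS_neq k (i : 'I_k) : 1 < k -> ordS i != i.
Proof.
move=> k1; apply/eqP => /(congr1 val) /= h.
have := ltn_ord i; move: h; case: (ltngtP i.+1 k) => [lt|gt|eq].
- rewrite modn_small //; lia.
- lia.
- rewrite eq modnn; lia.
Qed.

Lemma cycle_tight r H k : unif r H -> has_cycle k H ->
  exists2 E, E \in H & exists S, [/\ S \subset comp H E, #|S| = k & #|cover S| <= (r - 1) * k].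
Proof.
move=> u /andP[k1 /existsP[vs /existsP[es /and3P[ivs ies /forallP hc]]]].
move/injectiveP: ivs => ivs; move/injectiveP: ies => ies.
have k0 : 0 < k by lia.
set i0 : 'I_k := Ordinal k0.
have [E0H _ _] := and3P (hc i0).
exists (es i0) => //.
exists [set es i | i : 'I_k]; split.
- have stepm : forall m (hm : m < k), es (Ordinal hm) \in comp H (es i0).
    elim=> [|m IH] hm.
      have -> : Ordinal hm = i0 by apply: val_inj.
      exact: comp_self.
    have hm' : m < k by lia.
    have Hm := IH hm'.
    set j := Ordinal hm'.
    have -> : Ordinal hm = ordS j by apply: val_inj => /=; rewrite modn_small.
    have [ejH vj vSj] := and3P (hc j).
    have [eSjH vSj' _] := and3P (hc (ordS j)).
    rewrite -(comp_eq Hm) inE eSjH /=; apply: connect1; rewrite /adj ejH eSjH /=.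
    by apply/disjointNP; exists (vs (ordS j)).
  apply/subsetP => X /imsetP[i _ ->].
  have -> : i = Ordinal (ltn_ord i) by apply: val_inj.
  exact: stepm.
- by rewrite card_imset ?card_ord.
- rewrite cover_imset.
  have sub : \bigcup_(i in 'I_k) es i \subset \bigcup_(i in 'I_k) (es i :\ vs (ordS i)).
    apply/subsetP => v /bigcupP[i _ vi].
    have [eq|neq] := eqVneq v (vs (ordS i)).
      apply/bigcupP; exists (ordS i) => //; rewrite !inE.
      have [_ h _] := and3P (hc (ordS i)); rewrite eq h andbT.
      apply/negP => /eqP /ivs /eqP; rewrite eq_sym.
      by apply/negP; exact: ordS_neq.
    by apply/bigcupP; exists i => //; rewrite !inE neq vi.
  apply: leq_trans (subset_leq_card sub) _.
  apply: leq_trans (card_bigcup_le _) _.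
  rewrite (eq_bigr (fun _ => r - 1)).
    by rewrite sum_nat_const card_ord mulnC.
  move=> i _; have [eH _ h] := and3P (hc i).
  set x := #|es i :\ vs (ordS i)|.
  have := cardsD1 (vs (ordS i)) (es i); rewrite h (u _ eH) -/x /=; lia.
Qed.


Lemma comp_mono G H E : G \subset H -> comp G E \subset comp H E.
Proof.
move=> GH; apply/subsetP => X; rewrite !inE => /andP[XG c]; rewrite (subsetP GH X XG) /=.
move: c; apply: connect_sub => A B; rewrite /adj => /and3P[AG BG d].
by apply: connect1; rewrite /adj (subsetP GH A AG) (subsetP GH B BG).
Qed.

Lemma has_cycle_mono k G H : G \subset H -> has_cycle k G -> has_cycle k H.
Proof.
move=> GH /andP[k1 /existsP[vs /existsP[es /and3P[ivs ies /forallP hc]]]].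
rewrite /has_cycle k1 /=; apply/existsP; exists vs; apply/existsP; exists es.
rewrite ivs ies /=; apply/forallP => i; have /and3P[eG -> ->] := hc i.
by rewrite (subsetP GH _ eG).
Qed.

Definition pref r C := forall q, 0 < q <= #|C| ->
  exists P, [/\ P \subset C, #|P| = q & #|cover P| <= (r - 1) * q + 1].

Lemma comp_pref r H E : unif r H -> E \in H -> pref r (comp H E).
Proof.
move=> u EH q /andP[q0 qC].
have s1 : [set E] \subset comp H E by rewrite sub1set comp_self.
have n1 : [set E] != set0 by apply/set0Pn; exists E; rewrite set11.
have hq : #|[set E]| <= q <= #|comp H E| by rewrite cards1 q0 qC.
have [T [gT TC cT]] := grow_ex (@comp_conn H E) s1 n1 hq.
exists T; split=> //.
have uT : unif r T by apply: unif_sub u; apply: subset_trans TC (comp_sub H E).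
have := grown_cover uT gT; rewrite cover1 cards1 muln1 (u E EH) cT.
set c := #|cover T|; set m := (r - 1) * q; lia.
Qed.

Lemma mkconfig r e H A P : A \subset H -> P \subset H -> [disjoint A & P] ->
  #|A| + #|P| = e -> #|cover A| + 1 <= (r - 1) * #|A| -> #|cover P| <= (r - 1) * #|P| + 1 ->
  has_config ((r - 1) * e) e H.
Proof.
move=> AH PH d cE hA hP; apply/existsP; exists (A :|: P).
rewrite subUset AH PH /= card_disjU // cE eqxx /=.
rewrite coverU; apply: leq_trans (leq_card_setU _ _) _.
rewrite -cE mulnDr.
move: hA hP; set a := #|cover A|; set b := #|cover P|; set x := (r-1) * #|A|; set y := (r-1) * #|P|; lia.
Qed.


Definition Gset H e := [set X in H | e <= #|comp H X|].
Definition Kset H e := [set X in H | #|comp H X| < e].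

Lemma Gset_sub H e : Gset H e \subset H.
Proof. by apply/subsetP => X; rewrite inE => /andP[]. Qed.

Lemma G_girth r e H : unif r H -> ~~ has_config ((r - 1) * e) e H -> girth_gt e (Gset H e).
Proof.
move=> u nc; apply/forallP => [[k kl]] /=; apply/negP => hc.
have k1 : 1 < k by case/andP: hc.
have uG : unif r (Gset H e) by apply: unif_sub u; exact: Gset_sub.
have [E EG [S [SC cS coverS]]] := cycle_tight uG hc.
have := EG; rewrite inE => /andP[EH bigE].
have SC' : S \subset comp H E by apply: subset_trans SC (comp_mono _ (Gset_sub H e)).
have S0 : S != set0 by rewrite -card_gt0 cS; lia.
have hq : #|S| <= e <= #|comp H E| by rewrite cS bigE andbT.
have [T [gT TC cT]] := grow_ex (@comp_conn H E) SC' S0 hq.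
have uT : unif r T by apply: unif_sub u; apply: subset_trans TC (comp_sub H E).
have := grown_cover uT gT; rewrite cS cT => h.
move/negP: nc; apply; apply/existsP; exists T.
rewrite (subset_trans TC (comp_sub H E)) cT eqxx /=.
move: h coverS; set a := #|cover T|; set b := #|cover S|; set x := (r-1) * k; set y := (r - 1) * e; lia.
Qed.

Definition comps H := [set comp H E | E in H].

Lemma comps_disj H C C' : C \in comps H -> C' \in comps H -> C != C' ->
  [disjoint C & C'] /\ [disjoint cover C & cover C'].
Proof.
move=> /imsetP[E EH ->] /imsetP[E' E'H ->] ne.
by split; [apply: comp_disj | apply: comp_cover_disj].
Qed.

Lemma disj_rest H SS C : SS \subset comps H -> C \in SS ->
  [disjoint C & cover (SS :\ C)] /\ [disjoint cover C & cover (cover (SS :\ C))].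
Proof.
move=> sub CS; have CH := subsetP sub C CS.
split.
  apply/negPn/negP => /disjointNP[X XC /bigcupP[C' C'S XC']].
  move: C'S; rewrite !inE => /andP[ne C'S].
  have ne' : C != C' by rewrite eq_sym.
  have [d _] := comps_disj CH (subsetP sub C' C'S) ne'.
  by move: d; apply/negP/disjointNP; exists X.
apply/negPn/negP => /disjointNP[v vC /bigcupP[X /bigcupP[C' C'S XC'] vX]].
move: C'S; rewrite !inE => /andP[ne C'S].
have ne' : C != C' by rewrite eq_sym.
have [_ d] := comps_disj CH (subsetP sub C' C'S) ne'.
move: d; apply/negP/disjointNP; exists v => //; by apply/bigcupP; exists X.
Qed.

Lemma additive H SS C : SS \subset comps H -> C \in SS ->
  #|cover SS| = #|C| + #|cover (SS :\ C)| /\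
  #|cover (cover SS)| = #|cover C| + #|cover (cover (SS :\ C))|.
Proof.
move=> sub CS; have [d1 d2] := disj_rest sub CS.
have e1 : cover SS = C :|: cover (SS :\ C) by rewrite -cover_set1U setD1K.
by rewrite e1 coverU !card_disjU.
Qed.

Lemma pos_sum r H SS : SS \subset comps H ->
  (forall C, C \in SS -> #|cover C| + 1 <= (r - 1) * #|C|) ->
  #|cover (cover SS)| + #|SS| <= (r - 1) * #|cover SS|.
Proof.
move: {2}#|SS| (leqnn #|SS|) => m; elim: m SS => [|m IH] SS.
  by rewrite leqn0 cards_eq0 => /eqP -> _ _; rewrite !cover0 !cards0.
move=> sm sub hp.
have [SS0|[C CS]] := set_0Vmem SS.
  by rewrite SS0 !cover0 !cards0.
have [e1 e2] := additive sub CS.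
have sub' : SS :\ C \subset comps H by apply: subset_trans sub; apply: subsetDl.
have sm' : #|SS :\ C| <= m by move: sm; rewrite (cardsD1 C SS) CS; lia.
have := IH _ sm' sub' (fun C' h => hp C' (subsetP (subsetDl SS [set C]) C' h)).
have := hp C CS.
rewrite e1 e2 (cardsD1 C SS) CS mulnDr.
set a := #|cover C|; set b := #|cover (cover (SS :\ C))|; set c := #|SS :\ C|.
set x := (r - 1) * #|C|; set y := (r - 1) * #|cover (SS :\ C)|. move=> /= h1 h2; lia.
Qed.


Lemma comps_sub H SS : SS \subset comps H -> cover SS \subset H.
Proof.
move=> sub; apply/subsetP => X /bigcupP[C CS XC].
have /imsetP[E _ eC] := subsetP sub C CS.
by apply: (subsetP (comp_sub H E)); rewrite -eC.
Qed.

Lemma claim r e H SS : 0 < e -> unif r H -> SS \subset comps H ->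
  (forall C, C \in SS -> #|C| < e) ->
  #|cover (cover SS)| + 1 <= (r - 1) * #|cover SS| ->
  (e <= #|cover SS| \/ exists2 B : edges, B \subset H & [/\ [disjoint B & cover SS], e <= #|B| & pref r B]) ->
  has_config ((r - 1) * e) e H.
Proof.
move=> e0 u.
move: {2}#|SS| (leqnn #|SS|) => m; elim: m SS => [|m IH] SS sm sub small hd hB.
  move: sm; rewrite leqn0 cards_eq0 => /eqP SS0.
  by move: hd; rewrite SS0 !cover0 !cards0 muln0.
have [lt|ge] := ltnP #|cover SS| e.
  case: hB => [|[B BH [dB eB pB]]]; first by rewrite leqNgt lt.
  have hq : 0 < e - #|cover SS| <= #|B| by apply/andP; split; lia.
  have [P [PB cP coverP]] := pB _ hq.
  apply: (mkconfig (A := cover SS) (P := P)).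
  - exact: comps_sub.
  - exact: subset_trans PB BH.
  - by rewrite disjoint_sym; apply: disjointWl PB dB.
  - rewrite cP; lia.
  - exact: hd.
  - by rewrite cP.
have [SS0|[C0 C0S]] := set_0Vmem SS.
  by move: ge; rewrite SS0 cover0 cards0; lia.
pose pick_bad := [pick C in SS | (r - 1) * #|C| <= #|cover C|].
have [C [CS hd']] : exists C, C \in SS /\
    #|cover (cover (SS :\ C))| + 1 <= (r - 1) * #|cover (SS :\ C)| /\
    (e <= #|cover SS| -> #|cover (SS :\ C)| < e -> e - #|cover (SS :\ C)| <= #|C|).
  case: (pickP (fun C => (C \in SS) && ((r - 1) * #|C| <= #|cover C|))) => [C /andP[CS hC]|none].
    exists C; split => //.
    have [e1 e2] := additive sub CS.
    split; last by move=> _ _; lia.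
    move: hd hC; rewrite e1 e2 mulnDr.
    set a := #|cover C|; set b := #|cover (cover (SS :\ C))|; set x := (r - 1) * #|C|.
    set y := (r - 1) * #|cover (SS :\ C)|; lia.
  exists C0; split => //.
  have [e1 e2] := additive sub C0S.
  split; last by move=> _ _; lia.
  have sub' : SS :\ C0 \subset comps H by apply: subset_trans sub; apply: subsetDl.
  have good : forall C, C \in SS :\ C0 -> #|cover C| + 1 <= (r - 1) * #|C|.
    move=> C; rewrite inE => /andP[_ CS]; have := none C; rewrite CS /= => /negbT.
    rewrite -ltnNge; lia.
  have := pos_sum sub' good.
  have nz : 0 < #|SS :\ C0|.
    rewrite card_gt0; apply/negP => /eqP S'0.
    have := small C0 C0S; move: ge; rewrite e1 S'0 cover0 cards0; lia.
  move: nz; set b := #|cover (cover (SS :\ C0))|; set c := #|SS :\ C0|.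
  set y := (r - 1) * #|cover (SS :\ C0)|; lia.
case: hd' => hd' hq'.
have [e1 e2] := additive sub CS.
have sub' : SS :\ C \subset comps H by apply: subset_trans sub; apply: subsetDl.
have sm' : #|SS :\ C| <= m.
  move: sm; rewrite (cardsD1 C SS) CS /=; set c := #|SS :\ C|; lia.
have [ge'|lt'] := leqP e #|cover (SS :\ C)|.
  apply: (IH _ sm' sub') => //.
    by move=> C' /setD1P[_ h]; apply: small.
  by left.
have [d1 _] := disj_rest sub CS.
have /imsetP[E EH eC] := subsetP sub C CS.
have pC : pref r C by rewrite eC; apply: comp_pref.
have hq : 0 < e - #|cover (SS :\ C)| <= #|C| by apply/andP; split; [lia | exact: hq'].
have [P [PC cP coverP]] := pC _ hq.
apply: (mkconfig (A := cover (SS :\ C)) (P := P)).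
- exact: comps_sub.
- apply: subset_trans PC _; rewrite eC; exact: comp_sub.
- by rewrite disjoint_sym; apply: disjointWl PC d1.
- rewrite cP; lia.
- exact: hd'.
- by rewrite cP.
Qed.


Lemma neg_sum r H SS : SS \subset comps H ->
  (forall C, C \in SS -> (r - 1) * #|C| + 1 <= #|cover C|) ->
  (r - 1) * #|cover SS| + #|SS| <= #|cover (cover SS)|.
Proof.
move: {2}#|SS| (leqnn #|SS|) => m; elim: m SS => [|m IH] SS.
  by rewrite leqn0 cards_eq0 => /eqP -> _ _; rewrite !cover0 !cards0 muln0.
move=> sm sub hp.
have [SS0|[C CS]] := set_0Vmem SS.
  by rewrite SS0 !cover0 !cards0 muln0.
have [e1 e2] := additive sub CS.
have sub' : SS :\ C \subset comps H by apply: subset_trans sub; apply: subsetDl.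
have sm' : #|SS :\ C| <= m.
  move: sm; rewrite (cardsD1 C SS) CS /=; set c := #|SS :\ C|; lia.
have := IH _ sm' sub' (fun C' h => hp C' (subsetP (subsetDl SS [set C]) C' h)).
have := hp C CS.
rewrite e1 e2 (cardsD1 C SS) CS mulnDr.
set a := #|cover C|; set b := #|cover (cover (SS :\ C))|; set c := #|SS :\ C|.
set x := (r - 1) * #|C|; set y := (r - 1) * #|cover (SS :\ C)|. move=> /= h1 h2; lia.
Qed.

Lemma cover_comps H : cover (comps H) = H.
Proof.
apply/setP => X; apply/bigcupP/idP.
  by case=> C /imsetP[E EH ->]; apply: (subsetP (comp_sub H E)).
by move=> XH; exists (comp H X); [apply: imset_f | apply: comp_self].
Qed.

Lemma girth_noconfig r e H : 1 <= r -> 1 <= e -> unif r H -> girth_gt e H ->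
  ~~ has_config ((r - 1) * e) e H.
Proof.
move=> r1 e1 u gH; apply/negP => /existsP[F /and3P[FH /eqP cF coverF]].
have uF : unif r F by apply: unif_sub u.
case: (pickP (fun C => (C \in comps F) && (#|cover C| <= (r - 1) * #|C|))) => [C /andP[CF hC]|none].
  have /imsetP[E EF eC] := CF.
  have s1 : [set E] \subset C by rewrite sub1set eC comp_self.
  have n1 : [set E] != set0 by apply/set0Pn; exists E; rewrite set11.
  have hq : #|[set E]| <= #|C| <= #|C| by rewrite cards1 leqnn andbT card_gt0; apply/set0Pn; exists E; rewrite eC comp_self.
  have cC : conn C by rewrite eC; exact: comp_conn.
  have [T [gT TC cT]] := grow_ex cC s1 n1 hq.
  have TC' : T = C by apply/eqP; rewrite eqEcard TC cT leqnn.
  rewrite TC' in gT.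
  have CF' : C \subset F by rewrite eC; exact: comp_sub.
  have [k [k1 kC hk]] := grown_cycle r1 (unif_sub CF' uF) (subset_trans CF' FH) gT hC.
  have ke : k < e.+1 by rewrite ltnS -cF; apply: leq_trans kC (subset_leq_card CF').
  by move/forallP: gH => /(_ (Ordinal ke)) /=; rewrite hk.
have hn : forall C, C \in comps F -> (r - 1) * #|C| + 1 <= #|cover C|.
  by move=> C CF; have := none C; rewrite CF /= => /negbT; rewrite -ltnNge addn1.
have := neg_sum (subxx (comps F)) hn.
rewrite cover_comps.
have : 0 < #|comps F|.
  rewrite card_gt0; apply/set0Pn.
  have : 0 < #|F| by rewrite cF.
  by rewrite card_gt0 => /set0Pn[E EF]; exists (comp F E); apply: imset_f.
move: coverF; rewrite cF; set a := #|cover F|; set c := #|comps F|; set x := (r - 1) * e; lia.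
Qed.


Lemma cycle_restrict k G G' : G \subset G' ->
  (forall Y, Y \in G' -> Y \notin G -> forall a b, a \in Y -> b \in Y -> a != b ->
      (forall Z, Z \in G' -> a \in Z -> Z = Y) \/ (forall Z, Z \in G' -> b \in Z -> Z = Y)) ->
  has_cycle k G' -> has_cycle k G.
Proof.
move=> GG' hY /andP[k1 /existsP[vs /existsP[es /and3P[ivs ies /forallP hc]]]].
rewrite /has_cycle k1 /=; apply/existsP; exists vs; apply/existsP; exists es.
rewrite ivs ies /=; move/injectiveP: ivs => ivs; move/injectiveP: ies => ies.
apply/forallP => i; have /and3P[eG' -> ->] := hc i; rewrite !andbT.
apply/negPn/negP => eG.
have ab : vs i != vs (ordS i).
  apply/negP => /eqP /ivs /eqP; rewrite eq_sym; apply/negP; exact: ordS_neq.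
have /and3P[_ ai bi] := hc i.
case: (hY _ eG' eG _ _ ai bi ab) => [ha|hb].
  have /and3P[ep _ ep2] := hc (ord_pred i).
  rewrite ord_predK in ep2.
  move: (ha _ ep ep2) => /ies h.
  by have := ordS_neq (ord_pred i) k1; rewrite ord_predK h eqxx.
have /and3P[es' bs _] := hc (ordS i).
move: (hb _ es' bs) => /ies h.
by have := ordS_neq i k1; rewrite h eqxx.
Qed.

Lemma sunflower r e m G x (g : 'I_m * 'I_(r - 1) -> vert) (t0 : 'I_(r - 1)) :
  injective g -> (forall p, g p != x) -> (forall p, g p \notin cover G) ->
  girth_gt e G -> unif r G ->
  let P j := x |: [set g (j, t) | t : 'I_(r - 1)] in
  let G' := G :|: [set P j | j : 'I_m] in
  [/\ unif r G', girth_gt e G' & #|G'| = #|G| + m].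
Proof.
move=> ig gx gG gir u P G'.
have Pinj : injective P.
  move=> j j' e'; have : g (j, t0) \in P j' by rewrite -e' !inE; apply/orP; right; apply: imset_f.
  rewrite !inE (negPf (gx _)) /= => /imsetP[t _ /ig [->]] //.
have gP : forall j t, g (j, t) \in P j by move=> j t; rewrite !inE; apply/orP; right; apply: imset_f.
have PG : forall j, P j \notin G.
  move=> j; apply/negP => PjG; have := gG (j, t0); rewrite -/(g (j, t0)).
  by move/negP; apply; apply/bigcupP; exists (P j).
have uP : forall j, #|P j| = r.
  move=> j; rewrite cardsU1 card_imset; last by move=> t t' /ig [].
  rewrite card_ord; have -> : x \notin [set g (j, t) | t : 'I_(r - 1)].
    by apply/negP => /imsetP[t _ h]; move: (gx (j, t)); rewrite h eqxx.
  have : 0 < r - 1 by apply: leq_ltn_trans (leq0n t0) (ltn_ord t0).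
  move=> /= h; lia.
split.
- move=> Y; rewrite inE => /orP[/u //|/imsetP[j _ ->]]; exact: uP.
- apply/forallP => k; apply/negP => hk.
  have : has_cycle k G.
    apply: (cycle_restrict (G' := G')) hk; first by apply: subsetUl.
    move=> Y YG' YG a b aP bP ab.
    move: YG'; rewrite inE (negPf YG) /= => /imsetP[j _ YP]; subst Y.
    have uniq_gv : forall t, forall Z, Z \in G' -> g (j, t) \in Z -> Z = P j.
      move=> t Z; rewrite inE => /orP[ZG gZ|/imsetP[j' _ ->] gZ].
        by move: (gG (j, t)) => /negP; case; apply/bigcupP; exists Z.
      move: gZ; rewrite !inE (negPf (gx _)) /= => /imsetP[t' _ /ig [->]] //.
    have [ax|ax] := eqVneq a x.
      right; move: bP; rewrite !inE; case/orP => [/eqP bx|/imsetP[t _ ->]].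
        by move: ab; rewrite ax bx eqxx.
      exact: uniq_gv.
    left; move: aP; rewrite !inE; case/orP => [/eqP ax'|/imsetP[t _ ->]].
      by rewrite ax' eqxx in ax.
    exact: uniq_gv.
  by move/forallP: gir => /(_ k) /negP.
- rewrite card_disjU ?card_imset ?card_ord //.
  apply/negPn/negP => /disjointNP[Y YG /imsetP[j _ YP]].
  by move: YG; rewrite YP (negPf (PG j)).
Qed.


Lemma ordSS_neq m (j : 'I_m) : 2 < m -> ordS (ordS j) != j.
Proof.
move=> m2; apply/eqP => /(congr1 val) /=.
have := ltn_ord j; case: (ltngtP j.+1 m) => [lt|gt|eq] jm.
- rewrite (modn_small lt); case: (ltngtP j.+2 m) => [lt2|gt2|eq2].
  + rewrite modn_small //; lia.
  + lia.
  + rewrite eq2 modnn; lia.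
- lia.
- rewrite eq modnn modn_small; lia.
Qed.

Lemma iter_ordS_val m (j : 'I_m) i : val (iter i (@ordS m) j) = (j + i) %% m.
Proof.
elim: i => [|i IH] /=; first by rewrite addn0 modn_small.
by rewrite IH -addn1 modnDml -addnA addn1.
Qed.

Lemma exists_exit m (I : {set 'I_m}) : I != set0 -> I != setT -> exists2 j, j \in I & ordS j \notin I.
Proof.
move=> /set0Pn[j0 j0I] IT.
apply/exists_inP; move: IT; apply: contraR; rewrite negb_exists_in => /forall_inP h.
have hi : forall i, iter i (@ordS m) j0 \in I.
  elim=> [|i IH] //=; by have := h _ IH; rewrite negbK.
apply/eqP/setP => x; rewrite inE.
have -> : x = iter (x + m - j0) (@ordS m) j0 by apply: val_inj; rewrite iter_ordS_val;
  have := ltn_ord j0; have := ltn_ord x => ? ?; rewrite addnBA ?addKn ?modnDr ?modn_small //; lia.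
exact: hi.
Qed.

Lemma loose r e m (g : 'I_m * 'I_(r - 1) -> vert) (t0 : 'I_(r - 1)) :
  e < m -> 2 < m -> injective g ->
  let E j := [set g (j, t) | t : 'I_(r - 1)] :|: [set g (ordS j, t0)] in
  let L := [set E j | j : 'I_m] in
  [/\ unif r L, girth_gt e L & #|L| = m].
Proof.
move=> em m2 ig E L.
have r1 : 0 < r - 1 by apply: leq_ltn_trans (leq0n t0) (ltn_ord t0).
have inE1 : forall j j' t, (g (j', t) \in E j) = ((j' == j) || ((j' == ordS j) && (t == t0))).
  move=> j j' t; rewrite !inE; apply/orP/orP.
    case=> [/imsetP[t' _ /ig [-> _]]|/eqP /ig [-> ->]]; first by left.
    by right; rewrite !eqxx.
  case=> [/eqP ->|/andP[/eqP -> /eqP ->]]; first by left; apply: imset_f.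
  by right.
have Einj : injective E.
  move=> j j' eE.
  have h1 : g (j, t0) \in E j' by rewrite -eE inE1 eqxx.
  have h2 : g (j', t0) \in E j by rewrite eE inE1 eqxx.
  rewrite inE1 eqxx andbT in h1; rewrite inE1 eqxx andbT in h2.
  case/orP: h1 => [/eqP //|/eqP h1]; case/orP: h2 => [/eqP //|/eqP h2].
  by have := ordSS_neq j' m2; rewrite -h1 -h2 eqxx.
have cE : forall j, #|E j| = r.
  move=> j; rewrite cardsU card_imset; last by move=> t t' /ig [].
  rewrite cards1 card_ord.
  have -> : [set g (j, t) | t : 'I_(r - 1)] :&: [set g (ordS j, t0)] = set0.
    apply/setP => v; rewrite !inE; apply/negP => /andP[/imsetP[t _ ->] /eqP /ig [h _]].
    by have := ordS_neq j (ltnW m2); rewrite -h eqxx.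
  rewrite cards0; lia.
have uL : unif r L by move=> Y /imsetP[j _ ->].
split=> //; last by rewrite card_imset ?card_ord.
apply/forallP => [[k kl]] /=; apply/negP => hk.
have k1 : 1 < k by case/andP: hk.
have [E0 E0L [S [SC cS coverS]]] := cycle_tight uL hk.
have SL : S \subset L by apply: subset_trans SC (comp_sub L E0).
pose I := [set j | E j \in S].
have SI : S = E @: I.
  apply/setP => Y; apply/idP/imsetP.
    move=> YS; have /imsetP[j _ YE] := subsetP SL Y YS.
    by exists j; rewrite // inE -YE.
  by case=> j; rewrite inE => jS ->.
have cI : #|I| = k by rewrite -cS SI card_imset.
have I0 : I != set0 by rewrite -card_gt0 cI; lia.
have IT : I != setT by apply/negP => /eqP IT; move: cI; rewrite IT cardsT card_ord; lia.
have [j jI jI'] := exists_exit I0 IT.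
have sub : g (ordS j, t0) |: (g @: setX I [set: 'I_(r - 1)]) \subset cover S.
  apply/subsetP => v; rewrite !inE => /orP[/eqP ->|/imsetP[[j' t] /setXP[j'I _] ->]].
    apply/bigcupP; exists (E j); first by move: jI; rewrite inE.
    by rewrite inE1 !eqxx orbT.
  apply/bigcupP; exists (E j'); first by move: j'I; rewrite inE.
  by rewrite inE1 eqxx.
have := subset_leq_card sub.
rewrite cardsU1 card_imset // cardsX cardsT card_ord cI.
have -> : g (ordS j, t0) \notin g @: setX I [set: 'I_(r - 1)].
  apply/negP => /imsetP[[j' t] /setXP[j'I _] /ig [h _]].
  by move: jI'; rewrite h j'I.
move: coverS; set c := #|cover S|; set x := (r - 1) * k. rewrite /= mulnC -/x; lia.
Qed.


Lemma pair_code_inj d a b a' b' : b < d -> b' < d -> d * a + b = d * a' + b' -> a = a' /\ b = b'.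
Proof.
move=> bd b'd eq.
have d0 : 0 < d by lia.
have ea : a = a'.
  have := congr1 (divn^~ d) eq; rewrite /= !(mulnC d) !divnMDl // !divn_small //.
  by rewrite !addn0.
by split=> //; move: eq; rewrite ea => /addnI.
Qed.

Lemma code_inj m d (U : {set vert}) : d * m <= #|U| ->
  exists g : 'I_m * 'I_d -> vert, injective g /\ forall p, g p \in U.
Proof.
move=> dm.
have hp : forall p : 'I_m * 'I_d, d * p.1 + p.2 < #|U|.
  move=> [a b] /=; have := ltn_ord a; have := ltn_ord b => h1 h2.
  apply: leq_trans dm; apply: leq_trans (_ : d * a.+1 <= d * m); last by rewrite leq_mul2l h2 orbT.
  by rewrite mulnS addnC ltn_add2r.
exists (fun p => enum_val (Ordinal (hp p))); split; last by move=> p; apply: enum_valP.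
move=> [a b] [a' b'] /enum_val_inj /(congr1 val) /= h.
have [ea eb] := pair_code_inj (ltn_ord b) (ltn_ord b') h.
by congr pair; apply: val_inj.
Qed.

Lemma unifP r H : reflect (unif r H) (uniform r H).
Proof.
apply: (iffP forall_inP) => h E EH; first by apply/eqP; apply: h.
by apply/eqP; apply: h.
Qed.

Lemma hard r e H : 1 < r -> 1 < e -> (r - 1) * (e + 1) < n -> unif r H ->
  ~~ has_config ((r - 1) * e) e H ->
  exists G' : edges, [/\ unif r G', girth_gt e G' & #|H| <= #|G'|].
Proof.
move=> r1 e1 nbig u nc.
set G := Gset H e; set K := Kset H e.
have r1' : 0 < r - 1 by lia.
pose t0 : 'I_(r - 1) := Ordinal r1'.
have GH : G \subset H by apply: Gset_sub.
have cH : #|H| = #|G| + #|K|.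
  have := cardsID G H.
  have -> : H :&: G = G by apply/setIidPr.
  have -> : H :\: G = K by apply/setP => X; rewrite !inE; case: (X \in H); rewrite //= -ltnNge andbT.
  by move=> <-.
have uG : unif r G by apply: unif_sub u.
have gG : girth_gt e G := G_girth u nc.
set SS := [set comp H E | E in K].
have SSsub : SS \subset comps H.
  apply/subsetP => C /imsetP[E]; rewrite inE => /andP[EH _] ->; exact: imset_f.
have coverSS : cover SS = K.
  apply/setP => X; apply/bigcupP/idP.
    case=> C /imsetP[E]; rewrite inE => /andP[EH Esmall] -> XC.
    rewrite inE (subsetP (comp_sub H E) X XC) /= (comp_eq XC) //.
  move=> XK; exists (comp H X); first exact: imset_f.
  by apply: comp_self; move: XK; rewrite inE => /andP[].
have small : forall C, C \in SS -> #|C| < e.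
  by move=> C /imsetP[E]; rewrite inE => /andP[_ ?] ->.
have KGd : [disjoint cover K & cover G].
  apply/negPn/negP => /disjointNP[v /bigcupP[X XK vX] /bigcupP[Y YG vY]].
  move: XK YG; rewrite !inE => /andP[XH Xs] /andP[YH Yb].
  have YX : Y \in comp H X.
    apply: comp_closed YH _; apply/disjointNP; exists v => //; apply/bigcupP; exists X => //.
    exact: comp_self.
  by move: Yb; rewrite (comp_eq YX) leqNgt Xs.
have key : (e <= #|K| \/ G != set0) -> (r - 1) * #|K| <= #|cover K|.
  move=> hyp; rewrite leqNgt; apply/negP => lt.
  move/negP: nc; apply; apply: (claim (SS := SS)) => //; first by lia.
    by rewrite coverSS addn1.
  rewrite coverSS; case: hyp => [->|/set0Pn[X0 X0G]]; first by left.
  right; exists (comp H X0); first exact: comp_sub.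
  have X0H : X0 \in H by apply: (subsetP GH).
  split.
  - apply/negPn/negP => /disjointNP[Y YC YK].
    move: X0G YK; rewrite !inE => /andP[_ big] /andP[_ sm].
    by move: sm; rewrite (comp_eq YC) ltnNge big.
  - by move: X0G; rewrite inE => /andP[].
  - exact: comp_pref.
have sunf : forall x : vert, (r - 1) * #|K| <= #|~: (x |: cover G)| ->
    exists G' : edges, [/\ unif r G', girth_gt e G' & #|H| <= #|G'|].
  move=> x hx.
  have [g [ig gU]] := code_inj hx.
  have gx : forall p, g p != x.
    by move=> p; apply/negP => /eqP h; have := gU p; rewrite h !inE eqxx.
  have gc : forall p, g p \notin cover G.
    by move=> p; have := gU p; rewrite !inE negb_or => /andP[].
  have [u' gir' c'] := sunflower t0 ig gx gc gG uG.
  by eexists; split; [exact: u' | exact: gir' | rewrite c' cH].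
have [G0|[X0 X0G]] := set_0Vmem G.
- have KH : K = H.
    apply/setP => X; apply/idP/idP; first by rewrite inE => /andP[].
    move=> XH; rewrite inE XH /= ltnNge; apply/negP => big.
    by have := in_set0 X; rewrite -G0 inE XH big.
  have n0 : 0 < n by lia.
  have [small_n|big_n] := ltnP ((r - 1) * #|K|) n.
    apply: (sunf (Ordinal n0)).
    rewrite G0 cover0 setU0.
    have := cardsC [set Ordinal n0]; rewrite cards1 card_ord; lia.
  have eK : e < #|K|.
    have : (r - 1) * (e + 1) < (r - 1) * #|K| by lia.
    rewrite ltn_mul2l => /andP[_]; lia.
  have hk := key (or_introl (ltnW eK)).
  have hn : (r - 1) * #|K| <= #|[set: vert]|.
    apply: leq_trans hk _; exact: subset_leq_card (subsetT _).
  have [g [ig _]] := code_inj hn.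
  have m2 : 2 < #|K| by lia.
  have [u' gir' c'] := loose t0 eK m2 ig.
  by eexists; split; [exact: u' | exact: gir' | rewrite c' -KH].
- have Gn0 : G != set0 by apply/set0Pn; exists X0.
  have hk := key (or_intror Gn0).
  have X0H : X0 \in H by apply: (subsetP GH).
  have : 0 < #|X0| by rewrite (u X0 X0H); lia.
  rewrite card_gt0 => /set0Pn[x xX0].
  have xG : x \in cover G by apply/bigcupP; exists X0.
  apply: (sunf x).
  have -> : x |: cover G = cover G by apply/setP => v; rewrite !inE; case: eqP => // ->; rewrite xG.
  apply: leq_trans hk _; apply: subset_leq_card; apply/subsetP => v vK.
  rewrite inE; apply/negP => vG.
  by move: KGd; apply/negP/disjointNP; exists v.
Qed.

End Comps.

Theorem proposition1p10 (r e : nat) :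
  2 <= r -> 2 <= e ->
  exists n0 : nat, forall n : nat, n0 <= n ->
    f_r r n ((r - 1) * e) e = h_r r n e.
Proof.
move=> r2 e2; exists ((r - 1) * (e + 1)).+1 => n nbig.
apply/eqP; rewrite eqn_leq; apply/andP; split.
- apply/bigmax_leqP => H /andP[/unifP u nc].
  have [G' [u' g' c']] := hard r2 e2 nbig u nc.
  apply: leq_trans c' _; apply: (leq_bigmax_cond (P := fun G => uniform r G && girth_gt e G) (F := fun G => #|G|)).
  by rewrite g' andbT; apply/unifP.
- apply/bigmax_leqP => G /andP[/unifP u g].
  apply: (leq_bigmax_cond (P := fun H => uniform r H && ~~ has_config ((r - 1) * e) e H) (F := fun H => #|H|)).
  rewrite (girth_noconfig (r := r) _ _ u g) ?andbT; [by apply/unifP | lia | lia].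
Qed.
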